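(* Let $1<a_1<a_2$ be coprime integers. There exists $T$ such that for all $t\in(T,\infty)$, $|P(t)|=|\mu_t'(r_0(t))|>\frac{1}{a_2}$. Consequently, the set $\mathcal{T}=\{t\in(1,\infty): |P(t)|>\frac{1}{a_2},\ r_0(t)\in\mathbb{Q}\}$ is dense in some ray $(T,\infty)$ (i.e. $(T,\infty)$ is contained in the closure of $\mathcal{T}$).
   Context: For $t\in[1,\infty)$ and $(u,v)\in\mathbb{R}^2$, $\|(u,v)\|_t=(|u|^t+|v|^t)^{1/t}$. Define $\mu_t(r)=\left\|\left(\frac{1-r}{a_1},\frac{r}{a_2}\right)\right\|_t$ for $r\in[0,1]$, $r_0(t)=\min\{r\in[0,1]:\mu_t(r)=\frac{1}{a_2}\}$, and $P(t)=\mu_t'(r_0(t))$ (derivative in $r$). *)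

(* Defs.v *)
From Stdlib Require Import Reals ZArith ClassicalEpsilon.
From Coquelicot Require Import Coquelicot.
Open Scope R_scope.

(* x^t for x >= 0 and real t >= 1, with the convention 0^t = 0
   (Stdlib's Rpower 0 t = exp (t * ln 0) = 1 is not the right value). *)
Definition rpow (x t : R) : R :=
  if Req_EM_T x 0 then 0 else Rpower x t.

Definition tnorm (t u v : R) : R :=
  rpow (rpow (Rabs u) t + rpow (Rabs v) t) (1 / t).

Definition mu (a1 a2 : Z) (t r : R) : R :=
  tnorm t ((1 - r) / IZR a1) (r / IZR a2).

Definition is_r0 (a1 a2 : Z) (t r : R) : Prop :=
  0 <= r <= 1 /\ mu a1 a2 t r = 1 / IZR a2 /\
  forall s, 0 <= s <= 1 -> mu a1 a2 t s = 1 / IZR a2 -> r <= s.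

(* r_0(t) := the minimum (chosen by Hilbert's epsilon; it exists since
   r = 1 is in the set, which is closed) *)
Definition r0 (a1 a2 : Z) (t : R) : R :=
  epsilon (inhabits 0) (is_r0 a1 a2 t).

Definition P (a1 a2 : Z) (t : R) : R :=
  Derive (mu a1 a2 t) (r0 a1 a2 t).

Definition is_rational (x : R) : Prop :=
  exists p q : Z, q <> 0%Z /\ x = IZR p / IZR q.

Definition calT (a1 a2 : Z) (t : R) : Prop :=
  1 < t /\ Rabs (P a1 a2 t) > 1 / IZR a2 /\ is_rational (r0 a1 a2 t).

(* Main.v *)
Require Import Defs.
From Stdlib Require Import Reals ZArith ClassicalEpsilon Lra.
From Coquelicot Require Import Coquelicot.
Open Scope R_scope.

Lemma is_derive_Rpow (y x : R) : 0 < x ->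
  is_derive (fun x => Rpower x y) x (y * Rpower x (y-1)).
Proof. intros; apply is_derive_Reals, derivable_pt_lim_power; auto. Qed.

Definition phi (A1 A2 t r : R) := Rpower (A2*(1-r)/A1) t + Rpower r t.
Definition dphi (A1 A2 t r : R) :=
  t * Rpower r (t-1) - t * (A2/A1) * Rpower (A2*(1-r)/A1) (t-1).

Lemma phi_derive A1 A2 t r : 0 < A1 -> 0 < A2 -> 0 < r < 1 ->
  is_derive (phi A1 A2 t) r (dphi A1 A2 t r).
Proof.
  intros h1 h2 hr. unfold phi, dphi.
  replace (t * Rpower r (t - 1) - t * (A2 / A1) * Rpower (A2 * (1 - r) / A1) (t - 1))
   with ((-(A2/A1)) * (t * Rpower (A2 * (1 - r) / A1) (t - 1)) + t * Rpower r (t - 1)) by ring.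
  apply (is_derive_plus (fun r => Rpower (A2*(1-r)/A1) t) (fun r => Rpower r t)).
  - apply (is_derive_comp (fun x => Rpower x t) (fun r => A2*(1-r)/A1)).
    + apply is_derive_Rpow. apply Rdiv_lt_0_compat; nra.
    + auto_derive; auto. field. lra.
  - apply is_derive_Rpow; lra.
Qed.

Lemma Rpower_pos x y : 0 < Rpower x y.
Proof. unfold Rpower; apply exp_pos. Qed.

Lemma phi_decr A1 A2 t x y : 1 < A1 < A2 -> 1 < t -> 0 < x -> x < y ->
  y < A2/(A1+A2) -> phi A1 A2 t y < phi A1 A2 t x.
Proof.
  intros hA ht hx hxy hy.
  assert (hb : A2/(A1+A2) < 1) by (apply Rmult_lt_reg_r with (A1+A2); [lra|];
    unfold Rdiv; rewrite Rmult_assoc, Rinv_l; lra).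
  assert (H := incr_function (fun r => - phi A1 A2 t r) 0 (A2/(A1+A2))
     (fun r => - dphi A1 A2 t r)).
  simpl in H.
  enough (- phi A1 A2 t x < - phi A1 A2 t y) by lra.
  apply H; try lra.
  - intros r h0 h1. apply (is_derive_opp (phi A1 A2 t)). apply phi_derive; lra.
  - intros r h0 h1. unfold dphi.
    assert (hal : r < A2 * (1 - r) / A1).
    { apply Rmult_lt_reg_r with A1; [lra|]. unfold Rdiv.
      rewrite Rmult_assoc, Rinv_l by lra.
      assert (r * (A1 + A2) < A2).
      { apply Rmult_lt_reg_r with (/(A1+A2)). apply Rinv_0_lt_compat; lra.
        rewrite Rmult_assoc, Rinv_r by lra. lra. }
      lra. }
    assert (h3 : Rpower r (t-1) < Rpower (A2 * (1 - r) / A1) (t-1)).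
    { apply Rlt_Rpower_l; lra. }
    assert (h4 : 1 < A2/A1).
    { apply Rmult_lt_reg_r with A1; [lra|]. unfold Rdiv.
      rewrite Rmult_assoc, Rinv_l by lra. lra. }
    assert (h5 := Rpower_pos (A2 * (1 - r) / A1) (t-1)).
    assert (h6 : Rpower (A2 * (1 - r) / A1) (t-1) < A2/A1 * Rpower (A2 * (1 - r) / A1) (t-1)) by nra.
    assert (h7 : t * Rpower r (t-1) < t * (A2/A1 * Rpower (A2 * (1 - r) / A1) (t-1))).
    { apply Rmult_lt_compat_l; lra. }
    lra.
Qed.

Lemma rpow_pos x t : 0 < x -> rpow x t = Rpower x t.
Proof. intros h; unfold rpow; destruct (Req_EM_T x 0); [lra|auto]. Qed.

Lemma mu_eq a1 a2 t r : 0 < IZR a1 -> 0 < IZR a2 -> 0 < t -> 0 < r < 1 ->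
  mu a1 a2 t r = / IZR a2 * Rpower (phi (IZR a1) (IZR a2) t r) (/ t).
Proof.
  intros h1 h2 ht hr. unfold mu, tnorm, phi.
  set (A1 := IZR a1) in *. set (A2 := IZR a2) in *.
  assert (hu : 0 < (1 - r) / A1) by (apply Rdiv_lt_0_compat; lra).
  assert (hv : 0 < r / A2) by (apply Rdiv_lt_0_compat; lra).
  assert (hal : 0 < A2 * (1 - r) / A1) by (apply Rdiv_lt_0_compat; nra).
  rewrite (Rabs_right _ (Rgt_ge _ _ hu)), (Rabs_right _ (Rgt_ge _ _ hv)).
  rewrite !rpow_pos; auto.
  2: { rewrite !rpow_pos by auto. pose proof (Rpower_pos ((1 - r) / A1) t); pose proof (Rpower_pos (r / A2) t); lra. }
  replace ((1 - r) / A1) with (/A2 * (A2 * (1 - r) / A1)) by (field; lra).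
  replace (r / A2) with (/A2 * r) by (field; lra).
  assert (hi : 0 < / A2) by (apply Rinv_0_lt_compat; lra).
  rewrite <- !Rpower_mult_distr by lra.
  rewrite <- Rmult_plus_distr_l.
  rewrite <- Rpower_mult_distr.
  3: { pose proof (Rpower_pos (A2 * (1 - r) / A1) t); pose proof (Rpower_pos r t); lra. }
  2: apply Rpower_pos.
  rewrite Rpower_mult. replace (t * (1/t)) with 1 by (field; lra).
  rewrite Rpower_1 by lra. f_equal. f_equal. field. lra.
Qed.

Lemma Rpower_eq1 x y : 0 < x -> y <> 0 -> Rpower x y = 1 -> x = 1.
Proof.
  intros hx hy h. unfold Rpower in h.
  assert (y * ln x = 0). { rewrite <- exp_0 in h. apply exp_inv in h. auto. }
  assert (ln x = 0) by (destruct (Rmult_integral _ _ H); [contradiction|auto]).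
  rewrite <- (exp_ln x hx), H0. apply exp_0.
Qed.

Lemma Rpower_1base y : Rpower 1 y = 1.
Proof. unfold Rpower; rewrite ln_1, Rmult_0_r; apply exp_0. Qed.

Lemma mu_iff a1 a2 t r : 0 < IZR a1 -> 0 < IZR a2 -> 0 < t -> 0 < r < 1 ->
  (mu a1 a2 t r = 1 / IZR a2 <-> phi (IZR a1) (IZR a2) t r = 1).
Proof.
  intros h1 h2 ht hr. rewrite mu_eq by auto.
  assert (hp : 0 < phi (IZR a1) (IZR a2) t r).
  { unfold phi; pose proof (Rpower_pos (IZR a2 * (1 - r) / IZR a1) t); pose proof (Rpower_pos r t); lra. }
  split; intro H.
  - apply (Rpower_eq1 _ (/t)); auto. apply Rinv_neq_0_compat; lra.
    apply Rmult_eq_reg_l with (/ IZR a2). rewrite H. field. lra.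
    apply Rinv_neq_0_compat; lra.
  - rewrite H, Rpower_1base. field. lra.
Qed.

Lemma mu_0 a1 a2 t : 0 < IZR a1 -> 0 < IZR a2 -> 0 < t -> mu a1 a2 t 0 = 1 / IZR a1.
Proof.
  intros h1 h2 ht. unfold mu, tnorm.
  replace ((1 - 0) / IZR a1) with (1 / IZR a1) by (field; lra).
  replace (0 / IZR a2) with 0 by (field; lra).
  rewrite Rabs_R0. assert (e0 : rpow 0 t = 0) by (unfold rpow; destruct (Req_EM_T 0 0); lra).
  rewrite e0.
  assert (h : 0 < 1 / IZR a1) by (apply Rdiv_lt_0_compat; lra).
  rewrite Rabs_right by lra. rewrite (rpow_pos (1/IZR a1)) by auto.
  rewrite Rplus_0_r, rpow_pos by apply Rpower_pos.
  rewrite Rpower_mult. replace (t * (1/t)) with 1 by (field; lra). apply Rpower_1; auto.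
Qed.

Lemma P_value a1 a2 t r : 0 < IZR a1 -> 0 < IZR a2 -> 0 < t -> 0 < r < 1 ->
  phi (IZR a1) (IZR a2) t r = 1 ->
  Derive (mu a1 a2 t) r = / IZR a2 * / t * dphi (IZR a1) (IZR a2) t r.
Proof.
  intros h1 h2 ht hr hp. apply is_derive_unique.
  apply (is_derive_ext_loc (fun r => / IZR a2 * Rpower (phi (IZR a1) (IZR a2) t r) (/ t))).
  - assert (he : 0 < Rmin r (1 - r)) by (apply Rmin_glb_lt; lra).
    exists (mkposreal _ he). intros y hy. simpl in hy.
    unfold ball in hy; simpl in hy; unfold AbsRing_ball, abs, minus, plus, opp in hy; simpl in hy.
    assert (Rabs (y - r) < Rmin r (1 - r)) by exact hy.
    assert (Rmin r (1-r) <= r) by apply Rmin_l.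
    assert (Rmin r (1-r) <= 1 - r) by apply Rmin_r.
    apply Rabs_def2 in H.
    rewrite mu_eq; auto. lra.
  - replace (/ IZR a2 * / t * dphi (IZR a1) (IZR a2) t r) with
      (/ IZR a2 * (dphi (IZR a1) (IZR a2) t r * (/ t * Rpower (phi (IZR a1) (IZR a2) t r) (/t - 1)))).
    2: { rewrite hp, Rpower_1base. ring. }
    apply (is_derive_scal (fun r => Rpower (phi (IZR a1) (IZR a2) t r) (/ t))).
    apply (is_derive_comp (fun x => Rpower x (/t)) (phi (IZR a1) (IZR a2) t)).
    + apply is_derive_Rpow. lra.
    + apply phi_derive; lra.
Qed.

Lemma b_lt1 A1 A2 : 1 < A1 < A2 -> A2/(A1+A2) < 1.
Proof. intros. apply Rmult_lt_reg_r with (A1+A2); [lra|];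
    unfold Rdiv; rewrite Rmult_assoc, Rinv_l; lra. Qed.

Lemma r0_spec a1 a2 t r1 : 1 < IZR a1 < IZR a2 -> 1 < t -> 0 < r1 ->
  r1 < IZR a2/(IZR a1 + IZR a2) -> phi (IZR a1) (IZR a2) t r1 = 1 ->
  r0 a1 a2 t = r1.
Proof.
  intros hA ht hr1 hb hp.
  pose proof (b_lt1 _ _ hA) as hb1.
  assert (H : is_r0 a1 a2 t r1).
  { split; [lra|]. split. apply mu_iff; auto; lra.
    intros s hs hm.
    destruct (Req_dec s 0) as [->|n0].
    { rewrite mu_0 in hm by lra. exfalso.
      assert (1 / IZR a1 > 1 / IZR a2).
      { unfold Rdiv; rewrite !Rmult_1_l. apply Rinv_lt_contravar; nra. }
      lra. }
    destruct (Req_dec s 1) as [->|n1]; [lra|].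
    apply mu_iff in hm; try lra.
    destruct (Rle_lt_dec r1 s) as [|hlt]; auto.
    pose proof (phi_decr (IZR a1) (IZR a2) t s r1 hA ht ltac:(lra) hlt hb). lra. }
  assert (H2 : is_r0 a1 a2 t (r0 a1 a2 t)).
  { unfold r0. apply epsilon_spec. exists r1; auto. }
  destruct H as [h1 [h2 h3]]. destruct H2 as [g1 [g2 g3]].
  apply Rle_antisym; auto.
Qed.

Lemma Rpower_large x K : 1 < x -> exists T, forall t, T < t -> K < Rpower x t.
Proof.
  intros hx. assert (hl : 0 < ln x) by (rewrite <- ln_1; apply ln_increasing; lra).
  exists (Rmax 0 K / ln x). intros t ht.
  assert (Rmax 0 K < t * ln x).
  { apply Rmult_lt_reg_r with (/ ln x). apply Rinv_0_lt_compat; auto.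
    rewrite Rmult_assoc, Rinv_r by lra. rewrite Rmult_1_r. exact ht. }
  unfold Rpower. pose proof (Rmax_l 0 K). pose proof (Rmax_r 0 K).
  pose proof (exp_ineq1 (t * ln x)). 
  destruct (Req_dec (t * ln x) 0); [lra|]. specialize (H2 H3). lra.
Qed.

Lemma Rpower_small x : 0 < x < 1 -> exists T, forall t, T < t -> Rpower x t < 1/2.
Proof.
  intros hx. assert (1 < / x).
  { rewrite <- Rinv_1. apply Rinv_lt_contravar; lra. }
  destruct (Rpower_large (/x) 2 H) as [T HT]. exists T. intros t ht.
  specialize (HT t ht).
  assert (e : Rpower x t = / Rpower (/x) t).
  { unfold Rpower. rewrite ln_Rinv by lra. rewrite <- exp_Ropp. f_equal. ring. }
  rewrite e. pose proof (Rpower_pos (/x) t).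
  apply Rmult_lt_reg_r with (Rpower (/ x) t); auto. rewrite Rinv_l by lra. lra.
Qed.

Lemma phi_cont_r A1 A2 t r : 0 < A1 -> 0 < A2 -> 0 < r < 1 -> continuity_pt (phi A1 A2 t) r.
Proof.
  intros. apply continuity_pt_filterlim.
  apply (ex_derive_continuous (K:=R_AbsRing) (V:=R_NormedModule) (phi A1 A2 t) r).
  eexists. apply phi_derive; auto.
Qed.

Lemma phi_cont_t A1 A2 r s : continuity_pt (fun t => phi A1 A2 t r) s.
Proof.
  apply continuity_pt_filterlim.
  apply (ex_derive_continuous (K:=R_AbsRing) (V:=R_NormedModule) (fun t => phi A1 A2 t r) s).
  unfold phi, Rpower. auto_derive. auto.
Qed.

Lemma root_r A1 A2 t lo q : 0 < A1 -> 0 < A2 -> 0 < lo < q -> q < 1 ->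
  1 < phi A1 A2 t lo -> phi A1 A2 t q < 1 ->
  exists r, lo <= r <= q /\ phi A1 A2 t r = 1.
Proof.
  intros h1 h2 hl hq hlo hqq.
  destruct (Ranalysis5.IVT_interv (fun r => 1 - phi A1 A2 t r) lo q) as [r [hr he]].
  - intros a ha. apply continuity_pt_minus. apply continuity_pt_const. intros u v; auto.
    apply phi_cont_r; lra.
  - lra.
  - lra.
  - lra.
  - exists r. split; auto. lra.
Qed.

Lemma root_t A1 A2 r t1 t2 : t1 < t2 ->
  1 < phi A1 A2 t1 r -> phi A1 A2 t2 r < 1 ->
  exists t, t1 <= t <= t2 /\ phi A1 A2 t r = 1.
Proof.
  intros h hlo hqq.
  destruct (Ranalysis5.IVT_interv (fun t => 1 - phi A1 A2 t r) t1 t2) as [t [hr he]].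
  - intros a ha. apply continuity_pt_minus. apply continuity_pt_const. intros u v; auto.
    apply phi_cont_t.
  - lra.
  - lra.
  - lra.
  - exists t. split; auto. lra.
Qed.

Lemma Rpower_decr_exp x s u : 0 < x < 1 -> s < u -> Rpower x u < Rpower x s.
Proof.
  intros hx hs. assert (ln x < 0) by (rewrite <- ln_1; apply ln_increasing; lra).
  unfold Rpower. apply exp_increasing. nra.
Qed.

Lemma Rpower_gt1 x t : 1 < x -> 0 < t -> 1 < Rpower x t.
Proof.
  intros. rewrite <- (Rpower_O x) by lra. apply Rpower_lt; auto.
Qed.

Lemma Rpower_ge1 x t : 1 <= x -> 0 < t -> 1 <= Rpower x t.
Proof.
  intros. rewrite <- (Rpower_O x) by lra. apply Rle_Rpower; lra.
Qed.

Lemma rat_between x y : x < y -> exists p q : Z, q <> 0%Z /\ x < IZR p / IZR q < y.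
Proof.
  intros h. destruct (archimed (/ (y - x))) as [n1 n2].
  assert (hd : 0 < / (y - x)) by (apply Rinv_0_lt_compat; lra).
  set (n := up (/ (y - x))) in *.
  destruct (archimed (x * IZR n)) as [p1 p2].
  set (p := up (x * IZR n)) in *.
  exists p, n. split.
  - intro e. rewrite e in n1. simpl in n1. lra.
  - assert (hn : 0 < IZR n) by lra.
    split.
    + apply Rmult_lt_reg_r with (IZR n); auto. unfold Rdiv. rewrite Rmult_assoc, Rinv_l; lra.
    + apply Rmult_lt_reg_r with (IZR n); auto. unfold Rdiv. rewrite Rmult_assoc, Rinv_l by lra.
      assert (1 < (y - x) * IZR n).
      { apply Rmult_lt_reg_l with (/ (y-x)); auto. rewrite <- Rmult_assoc, Rinv_l by lra. lra. }
      lra.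
Qed.

Lemma Rpower_inv x t : 0 < x -> Rpower (/ x) t = / Rpower x t.
Proof. intros. unfold Rpower. rewrite ln_Rinv by lra. rewrite <- exp_Ropp. f_equal. ring. Qed.

Lemma Rpower_split x t : 0 < x -> Rpower x t = Rpower x (t-1) * x.
Proof. intros. replace t with ((t-1)+1) at 1 by ring. rewrite Rpower_plus, Rpower_1; auto. Qed.

Lemma dphi_bound A1 A2 t r : 0 < A1 -> 0 < A2 -> 1 < t -> 0 < r < 1 ->
  phi A1 A2 t r = 1 ->
  (1 - r * r) / (r * r) < Rpower (A2 * (1 - r) / A1 / r) t ->
  dphi A1 A2 t r < - t.
Proof.
  intros h1 h2 ht hr hp hz.
  set (al := A2 * (1 - r) / A1) in *.
  assert (hal : 0 < al) by (unfold al; apply Rdiv_lt_0_compat; nra).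
  unfold phi, dphi in *. fold al in hp |- *.
  unfold Rdiv in hz at 2. rewrite <- Rpower_mult_distr in hz.
  2: lra. 2: apply Rinv_0_lt_compat; lra.
  rewrite Rpower_inv in hz by lra.
  rewrite (Rpower_split al t), (Rpower_split r t) in hp, hz by lra.
  set (X := Rpower al (t-1)) in *. set (Y := Rpower r (t-1)) in *.
  assert (hX : 0 < X) by apply Rpower_pos. assert (hY : 0 < Y) by apply Rpower_pos.
  assert (hK : A2 / A1 * (1 - r) = al) by (unfold al; field; lra).
  set (K := A2 / A1) in *.
  assert (hc : X * al * r > Y * (1 - r * r)).
  { assert (hyr : 0 < Y * r) by nra.
    assert (hz2 : (1 - r*r) / (r*r) * (Y * r) < X * al) .
    { replace (X * al) with (X * al * / (Y * r) * (Y * r)) by (field; lra).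
      apply Rmult_lt_compat_r; auto. }
    replace ((1 - r * r) / (r * r) * (Y * r)) with (Y * (1 - r*r) / r) in hz2 by (field; lra).
    apply Rmult_lt_reg_r with (/ r). apply Rinv_0_lt_compat; lra.
    replace (X * al * r * / r) with (X * al) by (field; lra). exact hz2. }
  assert (hmain : K * X - Y > 1).
  { apply Rmult_lt_reg_r with (1 - r). lra.
    replace ((K * X - Y) * (1 - r)) with (al * X - Y * (1 - r)) by (rewrite <- hK; ring).
    rewrite <- hp at 1. nra. }
  nra.
Qed.

Lemma main_T a1 a2 : 1 < IZR a1 < IZR a2 ->
  exists T, 1 <= T /\ forall t, T < t ->
    0 < r0 a1 a2 t < IZR a2 / (IZR a1 + IZR a2) /\
    phi (IZR a1) (IZR a2) t (r0 a1 a2 t) = 1 /\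
    Rabs (P a1 a2 t) > 1 / IZR a2.
Proof.
  intros hA. set (A1 := IZR a1) in *. set (A2 := IZR a2) in *.
  set (c := 1 - A1/A2). set (b := A2/(A1+A2)).
  set (q := (c + b)/2). set (lo := c / 2).
  assert (i1 : A1 * / A1 = 1) by (field; lra).
  assert (i2 : A2 * / A2 = 1) by (field; lra).
  assert (i3 : (A1+A2) * / (A1+A2) = 1) by (field; lra).
  assert (p1 : 0 < / A1) by (apply Rinv_0_lt_compat; lra).
  assert (p2 : 0 < / A2) by (apply Rinv_0_lt_compat; lra).
  assert (p3 : 0 < / (A1+A2)) by (apply Rinv_0_lt_compat; lra).
  assert (hc : 0 < c) by (unfold c, Rdiv; nra).
  assert (hcb : c < b).
  { unfold c, b, Rdiv. 
    assert (e1 : 1 - A1 * / A2 = (A2 - A1) * / A2) by (field; lra).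
    rewrite e1. apply Rmult_lt_reg_r with (A2 * (A1 + A2)). nra.
    replace ((A2 - A1) * / A2 * (A2 * (A1 + A2))) with ((A2 - A1) * (A1+A2)) by (field; lra).
    replace (A2 * / (A1 + A2) * (A2 * (A1 + A2))) with (A2 * A2) by (field; lra). nra. }
  assert (hb1 : b < 1) by (apply b_lt1; auto).
  assert (hlo : 0 < lo) by (unfold lo; lra).
  assert (hloq : lo < q) by (unfold lo, q; lra).
  assert (hqb : q < b) by (unfold q; lra).
  assert (f2 : 1 < A2 * (1 - lo) / A1).
  { apply Rmult_lt_reg_r with A1; [lra|]. unfold Rdiv. rewrite Rmult_assoc, Rinv_l by lra.
    unfold lo, c. replace (A2 * (1 - (1 - A1 / A2) / 2) * 1) with ((A2 + A1)/2) by (field; lra). lra. }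
  assert (f3 : A2 * (1 - q) / A1 < 1).
  { apply Rmult_lt_reg_r with A1; [lra|]. unfold Rdiv. rewrite Rmult_assoc, Rinv_l by lra.
    assert (A2 * (1 - c) = A1) by (unfold c; field; lra).
    assert (c < q) by (unfold q; lra). nra. }
  assert (f3' : 0 < A2 * (1 - q) / A1) by (apply Rdiv_lt_0_compat; nra).
  assert (f4 : 1 < A2 * (1 - q) / A1 / q).
  { apply Rmult_lt_reg_r with (A1 * q); [nra|].
    replace (A2 * (1 - q) / A1 / q * (A1 * q)) with (A2 * (1 - q)) by (field; lra).
    assert (b * (A1 + A2) = A2) by (unfold b; field; lra). nra. }
  destruct (Rpower_large _ (1 / (lo * lo)) f4) as [T1 H1].
  destruct (Rpower_small _ (conj f3' f3)) as [T2 H2].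
  destruct (Rpower_small q ltac:(lra)) as [T3 H3].
  exists (Rmax 1 (Rmax T1 (Rmax T2 T3))). split; [apply Rmax_l|].
  intros t ht.
  pose proof (Rmax_l 1 (Rmax T1 (Rmax T2 T3))). pose proof (Rmax_r 1 (Rmax T1 (Rmax T2 T3))).
  pose proof (Rmax_l T1 (Rmax T2 T3)). pose proof (Rmax_r T1 (Rmax T2 T3)).
  pose proof (Rmax_l T2 T3). pose proof (Rmax_r T2 T3).
  specialize (H1 t ltac:(lra)). specialize (H2 t ltac:(lra)). specialize (H3 t ltac:(lra)).
  destruct (root_r A1 A2 t lo q) as [r1 [hr1 hp]]; try lra.
  { unfold phi. pose proof (Rpower_gt1 _ t f2 ltac:(lra)). pose proof (Rpower_pos lo t). lra. }
  { unfold phi. lra. }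
  assert (e : r0 a1 a2 t = r1).
  { apply r0_spec; [auto|lra|lra| |auto]. change (r1 < b); lra. }
  rewrite e. split; [change (0 < r1 < b); lra|]. split; auto.
  unfold P. rewrite e. rewrite P_value; try lra; auto.
  assert (hd : dphi A1 A2 t r1 < - t).
  { apply dphi_bound; try lra; auto.
    assert (hrho : A2 * (1 - q) / A1 / q <= A2 * (1 - r1) / A1 / r1).
    { apply Rmult_le_reg_r with (A1 * q * r1).
      { apply Rmult_lt_0_compat; [apply Rmult_lt_0_compat|]; lra. }
      replace (A2 * (1 - q) / A1 / q * (A1 * q * r1)) with (A2 * (1 - q) * r1) by (field; lra).
      replace (A2 * (1 - r1) / A1 / r1 * (A1 * q * r1)) with (A2 * (1 - r1) * q) by (field; lra).
      nra. }
    assert (Rpower (A2 * (1 - q) / A1 / q) t <= Rpower (A2 * (1 - r1) / A1 / r1) t).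
    { apply Rle_Rpower_l; lra. }
    assert ((1 - r1 * r1) / (r1 * r1) < 1 / (lo * lo)).
    { apply Rmult_lt_reg_r with (r1 * r1 * (lo * lo)).
      { apply Rmult_lt_0_compat; apply Rmult_lt_0_compat; lra. }
      replace ((1 - r1 * r1) / (r1 * r1) * (r1 * r1 * (lo * lo))) with ((1 - r1*r1) * (lo*lo)) by (field; lra).
      replace (1 / (lo * lo) * (r1 * r1 * (lo * lo))) with (r1 * r1) by (field; lra).
      assert (lo * lo <= r1 * r1) by nra.
      assert (0 < r1 * r1 * (lo * lo)) by (apply Rmult_lt_0_compat; apply Rmult_lt_0_compat; lra).
      lra. }
    lra. }
  assert (/ A2 * / t * dphi A1 A2 t r1 < - (1 / A2)).
  { replace (- (1/A2)) with (/ A2 * / t * (- t)) by (field; lra).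
    apply Rmult_lt_compat_l; auto. apply Rmult_lt_0_compat; auto. apply Rinv_0_lt_compat; lra. }
  change (IZR a2) with A2. change (IZR a1) with A1.
  assert (0 < 1 / A2) by (apply Rdiv_lt_0_compat; lra).
  rewrite Rabs_left by lra. lra.
  all: unfold A1, A2 in *; lra.
Qed.

Theorem proposition4 (a1 a2 : Z) :
  (1 < a1)%Z -> (a1 < a2)%Z -> Z.gcd a1 a2 = 1%Z ->
  (exists T : R, forall t : R, T < t -> Rabs (P a1 a2 t) > 1 / IZR a2) /\
  (exists T : R, forall x : R, T < x ->
     forall eps : R, 0 < eps -> exists t : R, calT a1 a2 t /\ Rabs (t - x) < eps).
Proof.
  intros h1 h2 _.
  apply IZR_lt in h1. apply IZR_lt in h2.
  assert (hA : 1 < IZR a1 < IZR a2) by lra.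
  destruct (main_T a1 a2 hA) as [T [hT1 HT]].
  split.
  - exists T. intros t ht. apply (HT t ht).
  - exists T. intros x hx eps he.
    set (A1 := IZR a1) in *. set (A2 := IZR a2) in *.
    set (t1 := x). set (t2 := x + eps / 2).
    destruct (HT t1 ltac:(unfold t1; lra)) as [hr1 [hp1 _]].
    destruct (HT t2 ltac:(unfold t2; lra)) as [hr2 [hp2 _]].
    set (r1 := r0 a1 a2 t1) in *. set (r2 := r0 a1 a2 t2) in *.
    pose proof (b_lt1 _ _ hA) as hb1.
    set (al1 := A2 * (1 - r1) / A1).
    assert (hal0 : 0 < al1) by (unfold al1; apply Rdiv_lt_0_compat; nra).
    assert (hal1 : al1 < 1).
    { destruct (Rlt_le_dec al1 1) as [|hge]; auto. exfalso.
      pose proof (Rpower_ge1 al1 t1 hge ltac:(unfold t1; lra)).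
      pose proof (Rpower_pos r1 t1). unfold phi in hp1. fold al1 in hp1. lra. }
    assert (hq1 : phi A1 A2 t2 r1 < 1).
    { rewrite <- hp1. unfold phi. fold al1.
      pose proof (Rpower_decr_exp al1 t1 t2 ltac:(lra) ltac:(unfold t1, t2; lra)).
      pose proof (Rpower_decr_exp r1 t1 t2 ltac:(lra) ltac:(unfold t1, t2; lra)). lra. }
    assert (h21 : r2 < r1).
    { destruct (Rlt_le_dec r2 r1) as [|hle]; auto. exfalso.
      destruct (Req_dec r1 r2) as [ee|ne].
      - rewrite ee in hq1. lra.
      - pose proof (phi_decr A1 A2 t2 r1 r2 hA ltac:(unfold t2; lra) ltac:(lra) ltac:(lra) ltac:(lra)). lra. }
    destruct (rat_between r2 r1 h21) as [p [qq [hq [hra hrb]]]].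
    set (r := IZR p / IZR qq) in *.
    assert (g1 : 1 < phi A1 A2 t1 r).
    { rewrite <- hp1. apply phi_decr; auto; unfold t1; lra. }
    assert (g2 : phi A1 A2 t2 r < 1).
    { rewrite <- hp2. apply phi_decr; auto; unfold t2; lra. }
    destruct (root_t A1 A2 r t1 t2 ltac:(unfold t1, t2; lra) g1 g2) as [t [ht hpt]].
    exists t. split.
    + destruct (HT t ltac:(unfold t1 in ht; lra)) as [_ [_ hP]].
      assert (e : r0 a1 a2 t = r).
      { apply r0_spec; [auto| | | |auto]; try (change (r < A2/(A1+A2))); unfold t1 in ht; lra. }
      split; [unfold t1 in ht; lra|]. split; auto.
      rewrite e. exists p, qq. auto.
    + unfold t1, t2 in *. rewrite Rabs_right; lra.
Qed.
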